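(* Let $\boldsymbol X=A\times_{\max}\boldsymbol Z$ be a recursive max-linear model on a DAG $\mathcal D=(V,E)$ satisfying Assumptions A, fix any $a>1$, and let $O\subseteq V$ satisfy $\mathrm{An}(O)\cap(V\setminus O)=\emptyset$. For $j\in V\setminus O$, we have $\mathrm{an}(j)\cap(V\setminus O)=\emptyset$ if and only if $$\sigma^2_{M_{i,aj,aO}}-\sigma^2_{M_{i,j,O}}=(a^2-1)\sigma^2_{M_{j,O}}\quad\text{for all } i\in V\setminus(O\cup\{j\}).\qquad(\ast)$$ If $j\in V\setminus O$ has an ancestor in $V\setminus O$, then $\sigma^2_{M_{i,aj,aO}}-\sigma^2_{M_{i,j,O}}\le(a^2-1)\sigma^2_{M_{j,O}}$ for all $i\in V\setminus(O\cup\{j\})$, with strict inequality whenever $i\in (V\setminus O)\cap\mathrm{an}(j)$. Finally, if two distinct nodes $j_1,j_2\in V\setminus O$ both satisfy $(\ast)$, then $j_1\notin\mathrm{an}(j_2)$ and $j_2\notin\mathrm{an}(j_1)$.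
   Context: Let $\mathcal D=(V,E)$ be a directed acyclic graph with $V=\{1,\dots,d\}$; $\mathrm{pa}(i)$, $\mathrm{an}(i)$, $\mathrm{de}(i)$ denote parents, ancestors (nodes with a directed path to $i$) and descendants of $i$, $\mathrm{An}(i)=\mathrm{an}(i)\cup\{i\}$, $\mathrm{An}(U)=\bigcup_{u\in U}\mathrm{An}(u)$; $\vee$ denotes maximum. A recursive max-linear model (RMLM) on $\mathcal D$ is the unique solution of $X_i=\bigvee_{k\in\mathrm{pa}(i)}c_{ik}X_k\vee c_{ii}Z_i$, $i\in V$, with edge weights $c_{ik}>0$ ($k\in \mathrm{pa}(i)$), $c_{ii}>0$; it equals $X_i=(A\times_{\max}\boldsymbol Z)_i=\bigvee_{j\in V}a_{ij}Z_j$ where $a_{ii}=c_{ii}$, $a_{ij}$ for $j\in\mathrm{an}(i)$ is the maximum over all directed paths $j=\ell_0\to\ell_1\to\dots\to\ell_m=i$ of $c_{jj}c_{\ell_1\ell_0}\cdots c_{\ell_m\ell_{m-1}}$, and $a_{ij}=0$ for $j\notin\mathrm{An}(i)$. Assumptions A: (A1) $Z_1,\dots,Z_d$ are independent, nonnegative, atom-free, with $n\,\mathbb P(n^{-1/2}Z_i>z)\to z^{-2}$ as $n\to\infty$ for all $z>0$; (A2) the norm is the Euclidean norm $\|\cdot\|$; (A3) $A$ is standardised, i.e. each row is divided by its Euclidean norm so that $\sum_{j\in V}a_{ij}^2=1$ for all $i$ (the model is taken as $\boldsymbol X=A\times_{\max}\boldsymbol Z$ with this standardised $A$). Under these assumptions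 it is known that $a_{ij}>0$ iff $j\in\mathrm{An}(i)$, and $a_{jj}>a_{ij}$ for all $i\neq j$. Angular measure: with columns $\boldsymbol a_k$ of $A$, $\boldsymbol X$ has angular measure $H_{\boldsymbol X}=\sum_{k\in V}\|\boldsymbol a_k\|^2\delta_{\boldsymbol a_k/\|\boldsymbol a_k\|}$ on $\Theta^{d-1}_+=\{\boldsymbol\omega\in[0,\infty)^d:\|\boldsymbol\omega\|=1\}$. For weights $b_1,\dots,b_d\ge0$, the squared scaling of the max-projection $Y=\bigvee_k b_kX_k$ is $\sigma_Y^2=\int_{\Theta^{d-1}_+}\bigvee_k b_k^2\omega_k^2\,dH_{\boldsymbol X}(\boldsymbol\omega)$. Notation: for $a\ge1$, $O\subseteq V$, $i,j\notin O$: $M_{i,aj,aO}=X_i\vee aX_j\vee\bigvee_{k\in O}aX_k$, $M_{i,j,O}=X_i\vee X_j\vee\bigvee_{k\in O}X_k$, $M_{j,O}=X_j\vee\bigvee_{k\in O}X_k$. *)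

(* Defs.v *)
(* scalars in an abstract real closed field R : rcfType
   (needed for Num.sqrt in the Euclidean norms). *)
From mathcomp Require Import all_boot all_order all_algebra.
Set Implicit Arguments.
Unset Strict Implicit.
Unset Printing Implicit Defensive.
Import Order.TTheory GRing.Theory Num.Theory.
Local Open Scope ring_scope.

Section RMLM.
Variable R : rcfType.
Variable d : nat.
Notation V := 'I_d.

(* A DAG on V = 'I_d: E k i means the directed edge k -> i. *)
Definition acyclic (E : rel V) : Prop := forall k i, E k i -> ~~ connect E i k.

(* An(i) = an(i) ∪ {i} : nodes with a (possibly empty) directed path to i. *)
Definition Anc (E : rel V) (i : V) : {set V} := [set k | connect E k i].
Definition anc (E : rel V) (i : V) : {set V} := [set k | (k != i) && connect E k i].

(* weight of the directed path j = l0 -> l1 -> ... -> lm (p = [l1;...;lm]):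
   c_jj * c_{l1 l0} * ... * c_{lm l(m-1)} *)
Definition path_weight (c : V -> V -> R) (j : V) (p : seq V) : R :=
  c j j * \prod_(e <- zip (j :: p) p) c e.2 e.1.

(* Unstandardised max-linear coefficient matrix: a_ij = maximum of path weights
   over all directed paths from j to i (paths in a DAG on d nodes have fewer
   than d edges); 0 if there is no such path. *)
Definition pathmax (E : rel V) (c : V -> V -> R) (i j : V) : R :=
  \big[Num.max/0]_(n < d)
    \big[Num.max/0]_(p : n.-tuple V | path E j p && (last j p == i))
      path_weight c j p.

Definition standardise (A : V -> V -> R) (i j : V) : R :=
  A i j / Num.sqrt (\sum_(k : V) A i k ^+ 2).

Definition colnorm (A : V -> V -> R) (k : V) : R :=
  Num.sqrt (\sum_(l : V) A l k ^+ 2).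

(* sigma^2 of the max-projection Y = \/_l b_l X_l, i.e. the integral of
   \/_l b_l^2 w_l^2 against H_X = sum_k ||a_k||^2 delta_{a_k/||a_k||}. *)
Definition sigma2 (A : V -> V -> R) (b : V -> R) : R :=
  \sum_(k : V) colnorm A k ^+ 2 *
     \big[Num.max/0]_(l : V) (b l ^+ 2 * (A l k / colnorm A k) ^+ 2).

(* weights of M_{i,aj,aO} = X_i \/ a X_j \/ \/_{k in O} a X_k *)
Definition w_i_aj_aO (a : R) (i j : V) (O : {set V}) (l : V) : R :=
  if l == i then 1 else if (l == j) || (l \in O) then a else 0.
Definition w_i_j_O (i j : V) (O : {set V}) (l : V) : R :=
  if (l == i) || (l == j) || (l \in O) then 1 else 0.
Definition w_j_O (j : V) (O : {set V}) (l : V) : R :=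
  if (l == j) || (l \in O) then 1 else 0.

Definition star_cond (A : V -> V -> R) (a : R) (O : {set V}) (j : V) : Prop :=
  forall i : V, i \notin O -> i != j ->
    sigma2 A (w_i_aj_aO a i j O) - sigma2 A (w_i_j_O i j O)
      = (a ^+ 2 - 1) * sigma2 A (w_j_O j O).

End RMLM.

Arguments w_i_j_O {R d} i j O l.
Arguments w_j_O {R d} j O l.

(* Main.v *)
Require Import Defs.
From mathcomp Require Import all_boot all_order all_algebra ring lra.
Import Order.TTheory GRing.Theory Num.Theory.
Local Open Scope ring_scope.

Section BM.
Variable R : realDomainType.

Lemma bmax_ge0 (I : Type) (r : seq I) (P : pred I) (F : I -> R) :
  0 <= \big[Num.max/0]_(i <- r | P i) F i.
Proof.
elim/big_rec: _ => // i x _ hx; by rewrite le_max hx orbT.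
Qed.

Lemma bmax_ge (I : eqType) (r : seq I) (P : pred I) (F : I -> R) i :
  i \in r -> P i -> F i <= \big[Num.max/0]_(j <- r | P j) F j.
Proof.
elim: r => // x r IH; rewrite inE big_cons => /orP [/eqP -> | ir] Pi.
  by rewrite Pi le_max lexx.
case: (P x); last exact: IH.
by rewrite le_max IH ?orbT.
Qed.

Lemma bmax_le (I : Type) (r : seq I) (P : pred I) (F : I -> R) y :
  0 <= y -> (forall i, P i -> F i <= y) ->
  \big[Num.max/0]_(i <- r | P i) F i <= y.
Proof.
move=> y0 h; elim/big_rec: _ => // i x Pi hx; by rewrite ge_max hx h.
Qed.

Lemma bmax_mulr (I : Type) (r : seq I) (P : pred I) (F : I -> R) c :
  0 <= c ->
  \big[Num.max/0]_(i <- r | P i) (c * F i) = c * \big[Num.max/0]_(i <- r | P i) F i.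
Proof.
move=> c0; elim/big_rec2: _ => [|i y1 y2 _ ->]; first by rewrite mulr0.
by rewrite maxr_pMr.
Qed.

Lemma bmax_mul_le (I J : Type) (r : seq I) (s : seq J) (P : pred I) (Q : pred J)
  (F : I -> R) (G : J -> R) Y :
  0 <= Y -> (forall i j, P i -> Q j -> F i * G j <= Y) ->
  \big[Num.max/0]_(i <- r | P i) F i * \big[Num.max/0]_(j <- s | Q j) G j <= Y.
Proof.
move=> Y0 h.
elim/big_rec: _ => [|i x Pi hx]; first by rewrite mul0r.
rewrite maxEle; case: ifP => _ //.
elim/big_rec: _ => [|j z Qj hz]; first by rewrite mulr0.
rewrite maxEle; case: ifP => _ //; exact: h.
Qed.

Lemma gk_facts (a u m : R) : 1 < a -> 0 <= u -> 0 <= m ->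
  let g := (a ^+ 2 - 1) * m - (Num.max u (a ^+ 2 * m) - Num.max u m) in
  [/\ 0 <= g, (u <= m \/ m = 0) -> g = 0 & (0 < m -> m < u -> 0 < g)].
Proof.
move=> ha hu hm /=; rewrite !maxEle.
have a2 : 1 < a ^+ 2 by rewrite expr2; nra.
case: ifP => h1; case: ifP => h2.
- split; first by lra.
  + by move=> _; ring.
  + move=> m0 mu; nra.
- split; first lra.
  + move/negbT: h2; rewrite -ltNge => h2 [h|h]; first lra. by rewrite h; nra.
  + move/negbT: h2; rewrite -ltNge => h2 m0 mu; nra.
- move/negbT: h1; rewrite -ltNge => h1; nra.
- move/negbT: h1; rewrite -ltNge => h1; move/negbT: h2; rewrite -ltNge => h2.
  split; first nra.
  + move=> [h|h]; first lra. rewrite h; nra.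
  + move=> m0 _; nra.
Qed.
End BM.

Section Abs.
Variable R : rcfType.
Variable d : nat.
Notation V := 'I_d.
Variable A : V -> V -> R.
Hypothesis hA0 : forall l k, 0 <= A l k.
Hypothesis hAkk : forall k, 0 < A k k.

Lemma bmax_geT (F : V -> R) l : F l <= \big[Num.max/0]_(m : V) F m.
Proof. by apply: bmax_ge; rewrite ?mem_index_enum. Qed.

Lemma sigma2E b : sigma2 A b = \sum_k \big[Num.max/0]_l (b l ^+ 2 * A l k ^+ 2).
Proof.
apply: eq_bigr => k _.
have cn : 0 < colnorm A k.
  rewrite /colnorm sqrtr_gt0; apply: (lt_le_trans (y := A k k ^+ 2)).
    by rewrite exprn_gt0.
  rewrite (bigD1 k) //= lerDl; apply: sumr_ge0 => l _; exact: sqr_ge0.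
have cn2 : colnorm A k ^+ 2 != 0 by rewrite expf_neq0 // gt_eqF.
rewrite (eq_bigr (fun l => (colnorm A k ^+ 2)^-1 * (b l ^+ 2 * A l k ^+ 2))); last first.
  by move=> l _; rewrite expr_div_n mulrA mulrC.
rewrite bmax_mulr ?invr_ge0 ?exprn_ge0 ?(ltW cn) // mulrA mulfV // mul1r.
reflexivity.
Qed.

Variable O : {set V}.
Variable a : R.
Hypothesis ha : 1 < a.

Definition Mk (j k : V) := \big[Num.max/0]_l (w_j_O j O l ^+ 2 * A l k ^+ 2).

Lemma Mk_ge j k l : (l == j) || (l \in O) -> A l k ^+ 2 <= Mk j k.
Proof.
move=> h; apply: le_trans (bmax_geT _ l); by rewrite /w_j_O h expr1n mul1r.
Qed.

Lemma Mk_ge0 j k : 0 <= Mk j k.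
Proof. exact: bmax_ge0. Qed.

Lemma col1 i j k : i \notin O -> i != j ->
  \big[Num.max/0]_l (w_i_aj_aO a i j O l ^+ 2 * A l k ^+ 2)
  = Num.max (A i k ^+ 2) (a ^+ 2 * Mk j k).
Proof.
move=> iO ij; have a0 : 0 <= a ^+ 2 by exact: sqr_ge0.
apply/le_anti/andP; split.
  apply: bmax_le => [|l _]; first by rewrite le_max sqr_ge0.
  rewrite /w_i_aj_aO; case: eqP => [->|_]; first by rewrite expr1n mul1r le_max lexx.
  case: ifP => h.
    by rewrite le_max orbC ler_wpM2l // Mk_ge.
  by rewrite expr0n mul0r le_max sqr_ge0.
rewrite ge_max; apply/andP; split.
  by apply: le_trans (bmax_geT _ i); rewrite /w_i_aj_aO eqxx expr1n mul1r.
rewrite /Mk -bmax_mulr //; apply: bmax_le => [|l _]; first exact: bmax_ge0.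
rewrite /w_j_O; case: ifP => h; last by rewrite expr0n mul0r mulr0 bmax_ge0.
apply: le_trans (bmax_geT _ l); rewrite /w_i_aj_aO h.
have -> : (l == i) = false.
  by apply/negbTE; apply/eqP => li; move: h; rewrite li (negbTE ij) (negbTE iO).
by rewrite expr1n mul1r.
Qed.

Lemma col2 i j k : i \notin O -> i != j ->
  \big[Num.max/0]_l (w_i_j_O i j O l ^+ 2 * A l k ^+ 2)
  = Num.max (A i k ^+ 2) (Mk j k).
Proof.
move=> iO ij.
apply/le_anti/andP; split.
  apply: bmax_le => [|l _]; first by rewrite le_max sqr_ge0.
  rewrite /w_i_j_O; case: eqP => [->|_] /=; first by rewrite expr1n mul1r le_max lexx.
  case: ifP => h.
    by rewrite le_max orbC expr1n mul1r Mk_ge.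
  by rewrite expr0n mul0r le_max sqr_ge0.
rewrite ge_max; apply/andP; split.
  by apply: le_trans (bmax_geT _ i); rewrite /w_i_j_O eqxx expr1n mul1r.
apply: bmax_le => [|l _]; first exact: bmax_ge0.
rewrite /w_j_O; case: ifP => h; last by rewrite expr0n mul0r bmax_ge0.
apply: le_trans (bmax_geT _ l); rewrite /w_i_j_O -orbA h orbT.
by rewrite expr1n mul1r.
Qed.

Definition gk i j k := (a ^+ 2 - 1) * Mk j k -
   (Num.max (A i k ^+ 2) (a ^+ 2 * Mk j k) - Num.max (A i k ^+ 2) (Mk j k)).

Lemma Dsum i j : i \notin O -> i != j ->
  (a ^+ 2 - 1) * sigma2 A (w_j_O j O) -
    (sigma2 A (w_i_aj_aO a i j O) - sigma2 A (w_i_j_O i j O))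
  = \sum_k gk i j k.
Proof.
move=> iO ij; rewrite !sigma2E mulr_sumr -sumrB -sumrB; apply: eq_bigr => k _.
by rewrite col1 // col2.
Qed.

Lemma gk_ge0 i j k : 0 <= gk i j k.
Proof. by case: (@gk_facts _ a _ _ ha (sqr_ge0 (A i k)) (Mk_ge0 j k)). Qed.

Lemma D_ge0 i j : i \notin O -> i != j ->
  sigma2 A (w_i_aj_aO a i j O) - sigma2 A (w_i_j_O i j O)
         <= (a ^+ 2 - 1) * sigma2 A (w_j_O j O).
Proof.
move=> iO ij; rewrite -subr_ge0 Dsum //; apply: sumr_ge0 => k _; exact: gk_ge0.
Qed.

Lemma D_gt0 i j k : i \notin O -> i != j -> 0 < gk i j k ->
  sigma2 A (w_i_aj_aO a i j O) - sigma2 A (w_i_j_O i j O)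
         < (a ^+ 2 - 1) * sigma2 A (w_j_O j O).
Proof.
move=> iO ij gp; rewrite -subr_gt0 Dsum // (bigD1 k) //=.
by rewrite ltr_pwDl // sumr_ge0 // => l _; exact: gk_ge0.
Qed.

Lemma D_eq0 i j : i \notin O -> i != j -> (forall k, gk i j k = 0) ->
  sigma2 A (w_i_aj_aO a i j O) - sigma2 A (w_i_j_O i j O)
         = (a ^+ 2 - 1) * sigma2 A (w_j_O j O).
Proof.
move=> iO ij h; apply/eqP; rewrite eq_sym -subr_eq0 Dsum // big1 //.
Qed.

End Abs.

Section Abs2.
Variable R : rcfType.
Variable d : nat.
Notation V := 'I_d.
Variable E : rel V.
Variable A : V -> V -> R.
Hypothesis hA0 : forall l k, 0 <= A l k.
Hypothesis hApos : forall l k, (0 < A l k) = connect E k l.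
Hypothesis hAdom : forall l k, l != k -> A l k < A k k.
Variable O : {set V}.
Hypothesis hO : forall l, l \in O -> Anc E l \subset O.
Variable a : R.
Hypothesis ha : 1 < a.

Lemma hAkk k : 0 < A k k.
Proof. by rewrite hApos connect0. Qed.

Lemma Azero l k : ~~ connect E k l -> A l k = 0.
Proof.
by move=> h; apply/eqP; rewrite eq_le hA0 andbT leNgt hApos.
Qed.

Lemma sq_le (x y : R) : 0 <= x -> x <= y -> x ^+ 2 <= y ^+ 2.
Proof. move=> x0 xy; rewrite !expr2; apply: ler_pM => //. Qed.

Lemma sq_lt (x y : R) : 0 <= x -> x < y -> x ^+ 2 < y ^+ 2.
Proof. move=> x0 xy; rewrite !expr2; apply: ltr_pM => //. Qed.

Lemma conn_O k l : l \in O -> connect E k l -> k \in O.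
Proof.
by move=> lO ckl; have := subsetP (hO l lO) k; rewrite inE; apply.
Qed.

Lemma part1_fwd j : j \notin O -> anc E j :&: ~: O = set0 -> star_cond A a O j.
Proof.
move=> jO he i iO ij; apply: (@D_eq0 R d A hAkk O a i j iO ij) => k.
case: (@gk_facts _ a _ _ ha (sqr_ge0 (A i k)) (@Mk_ge0 R d A O j k)) => _ h _.
apply: h.
case kO: (k \in O).
  left; apply: le_trans (@Mk_ge R d A O j k k _); last by rewrite kO orbT.
  apply: sq_le => //; apply: ltW; apply: hAdom.
  by apply: contraNneq iO => ->.
case kj: (k == j).
  left; rewrite (eqP kj); apply: le_trans (@Mk_ge R d A O j j j _); last by rewrite eqxx.
  by apply: sq_le => //; apply: ltW; apply: hAdom.
right; apply/le_anti; rewrite Mk_ge0 andbT; apply: bmax_le => // l _.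
rewrite /w_j_O; case: ifP => h; last by rewrite expr0n !mul0r.
rewrite Azero ?expr0n ?mulr0 //; case/orP: h => [/eqP ->|lO].
  apply/negP => ckj; have : k \in anc E j :&: ~: O by rewrite !inE kj ckj kO.
  by rewrite he inE.
by apply/negP => /(conn_O k l lO); rewrite kO.
Qed.

Lemma strict i j : i \notin O -> i \in anc E j -> 0 < @gk R d A O a i j i.
Proof.
move=> iO; rewrite inE => /andP [ij cij].
have Mi : @Mk R d A O j i = A j i ^+ 2.
  apply/le_anti/andP; split; last by apply: Mk_ge; rewrite eqxx.
  apply: bmax_le => [|l _]; first exact: sqr_ge0.
  rewrite /w_j_O; case: ifP => h; last by rewrite expr0n mul0r sqr_ge0.
  rewrite expr1n mul1r; case/orP: h => [/eqP -> //| lO].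
  rewrite Azero ?expr0n ?sqr_ge0 //; apply/negP => /(conn_O i l lO).
  by rewrite (negbTE iO).
case: (@gk_facts _ a _ _ ha (sqr_ge0 (A i i)) (@Mk_ge0 R d A O j i)) => _ _ h.
apply: h; rewrite Mi.
  by rewrite exprn_gt0 // hApos.
apply: sq_lt => //; apply: hAdom; by rewrite eq_sym.
Qed.

Lemma abs_main :
  (forall j, j \notin O ->
     (anc E j :&: ~: O = set0 <-> star_cond A a O j)) /\
  (forall j, j \notin O -> anc E j :&: ~: O != set0 ->
     forall i, i \notin O -> i != j ->
       sigma2 A (w_i_aj_aO a i j O) - sigma2 A (w_i_j_O i j O)
         <= (a ^+ 2 - 1) * sigma2 A (w_j_O j O)
       /\ (i \in anc E j ->
       sigma2 A (w_i_aj_aO a i j O) - sigma2 A (w_i_j_O i j O)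
         < (a ^+ 2 - 1) * sigma2 A (w_j_O j O))) /\
  (forall j1 j2, j1 \notin O -> j2 \notin O -> j1 != j2 ->
     star_cond A a O j1 -> star_cond A a O j2 ->
     j1 \notin anc E j2 /\ j2 \notin anc E j1).
Proof.
have back : forall j, star_cond A a O j -> anc E j :&: ~: O = set0.
  move=> j st; apply/setP => k; rewrite !inE; apply/negbTE/negP => /andP [/andP [kj ck] kO].
  have kanc : k \in anc E j by rewrite inE kj ck.
  have := @D_gt0 R d A hAkk O a ha k j k kO kj (strict k j kO kanc).
  by rewrite (st k kO kj) ltxx.
split; first by move=> j jO; split; [exact: part1_fwd | exact: back].
split.
  move=> j jO _ i iO ij; split; first exact: (@D_ge0 R d A hAkk O a ha i j iO ij).
  move=> ianc; exact: (@D_gt0 R d A hAkk O a ha i j i iO ij (strict i j iO ianc)).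
move=> j1 j2 j1O j2O _ s1 s2; split.
  apply/negP => h; have := back j2 s2; move/setP/(_ j1); by rewrite in_setI in_setC h j1O inE.
apply/negP => h; have := back j1 s1; move/setP/(_ j2); by rewrite in_setI in_setC h j2O inE.
Qed.

End Abs2.
Set Implicit Arguments.
Unset Strict Implicit.

Section Paths.
Variable R : rcfType.
Variable d : nat.
Notation V := 'I_d.
Variable E : rel V.
Variable c : V -> V -> R.
Hypothesis hdag : acyclic E.
Hypothesis hedge : forall k i, E k i -> 0 < c i k.
Hypothesis hdiag : forall i, 0 < c i i.

Lemma uniq_pathE x s : path E x s -> uniq (x :: s).
Proof.
elim: s x => [|y s IH] x //= /andP [exy ps].
have := IH y ps => /= ->; rewrite andbT.
apply/negP => xin; have := path_connect ps xin.
by move/negP: (hdag exy).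
Qed.

Lemma size_pathE x s : path E x s -> (size s < d)%N.
Proof.
move=> /uniq_pathE /card_uniqP h.
have := max_card (mem (x :: s)); rewrite card_ord.
by rewrite h.
Qed.

Lemma prod_pos j p : path E j p -> 0 < \prod_(e <- zip (j :: p) p) c e.2 e.1.
Proof.
elim: p j => [|y s IH] j /=; first by rewrite big_nil ltr01.
move=> /andP [ejy ps]; rewrite big_cons mulr_gt0 //=; first exact: hedge.
exact: IH.
Qed.

Lemma weight_pos j p : path E j p -> 0 < path_weight c j p.
Proof. by move=> h; rewrite /path_weight mulr_gt0 ?prod_pos. Qed.

Notation P := (pathmax E c).

Lemma P_ge0 i j : 0 <= P i j.
Proof. exact: bmax_ge0. Qed.

Lemma P_ge_path j p : path E j p -> path_weight c j p <= P (last j p) j.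
Proof.
move=> ps; have hs := size_pathE ps.
rewrite /pathmax; apply: le_trans (@bmax_geT R d _ (Ordinal hs)).
apply: (@bmax_ge _ _ _ _ (fun t : (Ordinal hs).-tuple V => path_weight c j t) (in_tuple p)).
  exact: mem_index_enum.
by rewrite /= ps eqxx.
Qed.

Lemma P_pos i j : (0 < P i j) = connect E j i.
Proof.
apply/idP/idP.
  apply: contraLR => nc; rewrite -leNgt; apply: bmax_le => // n _.
  apply: bmax_le => // t /andP [pt /eqP lt].
  by case/negP: nc; apply/connectP; exists t.
move/connectP => [p ps ->]; apply: lt_le_trans (P_ge_path ps).
exact: weight_pos.
Qed.

Lemma P_diag k : c k k <= P k k.
Proof.
have := @P_ge_path k [::] erefl; rewrite /path_weight big_nil mulr1; exact.
Qed.

Lemma zip_catE (x : V) (q p : seq V) :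
  zip (x :: q ++ p) (q ++ p) = zip (x :: q) q ++ zip (last x q :: p) p.
Proof. by elim: q x => [|y q IH] x //=; rewrite IH. Qed.

Lemma P_concat l k t : P l k * P k t <= c k k * P l t.
Proof.
have ck0 : 0 <= c k k by exact: ltW.
apply: bmax_mul_le => [|n m _ _]; first by rewrite mulr_ge0 // P_ge0.
apply: bmax_mul_le => [|p q /andP [pp /eqP lp] /andP [pq /eqP lq]].
  by rewrite mulr_ge0 // P_ge0.
have pqp : path E t (q ++ p) by rewrite cat_path pq lq pp.
have := P_ge_path pqp; rewrite last_cat lq lp => h.
have -> : path_weight c k p * path_weight c t q = c k k * path_weight c t (q ++ p).
  rewrite /path_weight zip_catE big_cat /= lq; ring.
exact: ler_wpM2l.
Qed.

Lemma cycle_eq x y : connect E x y -> connect E y x -> x = y.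
Proof.
move=> /connectP [[|z s] ps ->] //= cyx.
move: ps => /= /andP [exz zs].
have czl : connect E z (last z s) := path_connect zs (mem_last z s).
 have := connect_trans czl cyx.
by move/negP: (hdag exz).
Qed.

Definition Ssum l := \sum_t P l t ^+ 2.

Lemma Ssum_pos l : 0 < Ssum l.
Proof.
rewrite /Ssum (bigD1 l) //=; apply: (lt_le_trans (y := P l l ^+ 2)).
  by rewrite exprn_gt0 //; exact: lt_le_trans (hdiag l) (P_diag l).
by rewrite lerDl sumr_ge0 // => t _; exact: sqr_ge0.
Qed.

Notation A := (standardise (pathmax E c)).

Lemma sqS l : 0 < Num.sqrt (Ssum l).
Proof. by rewrite sqrtr_gt0 Ssum_pos. Qed.

Lemma A0 l k : 0 <= A l k.
Proof. by rewrite /standardise divr_ge0 ?P_ge0 ?sqrtr_ge0. Qed.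

Lemma Apos l k : (0 < A l k) = connect E k l.
Proof.
rewrite /standardise pmulr_lgt0 ?invr_gt0 -?P_pos //; exact: (sqS l).
Qed.

Lemma Adom l k : l != k -> A l k < A k k.
Proof.
move=> lk.
have Akk : 0 < A k k by rewrite Apos connect0.
case ckl: (connect E k l); last first.
  suff -> : A l k = 0 by [].
  by apply/eqP; rewrite eq_le A0 andbT leNgt Apos ckl.
have Pkl : P k l = 0.
  apply/eqP; rewrite eq_le P_ge0 andbT leNgt P_pos.
  by apply/negP => clk; move: lk; rewrite (cycle_eq ckl clk) eqxx.
rewrite /standardise -/(Ssum l) -/(Ssum k).
rewrite ltr_pdivrMr ?sqS // mulrAC ltr_pdivlMr ?sqS //.
rewrite -(ltr_pXn2r (n := 2)) // ?nnegrE ?mulr_ge0 ?P_ge0 ?sqrtr_ge0 //.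
rewrite !exprMn !sqr_sqrtr ?ltW ?Ssum_pos // /Ssum !mulr_sumr.
rewrite (bigD1 l) //= [X in _ < X](bigD1 l) //=.
apply: ltr_leD.
  rewrite Pkl expr0n mulr0 mulr_gt0 // exprn_gt0 //.
    exact: lt_le_trans (hdiag k) (P_diag k).
  exact: lt_le_trans (hdiag l) (P_diag l).
apply: ler_sum => t _; rewrite -!exprMn; apply: sq_le.
  by rewrite mulr_ge0 ?P_ge0.
apply: le_trans (P_concat l k t) _.
by apply: ler_wpM2r; [exact: P_ge0 | exact: P_diag].
Qed.

End Paths.
Theorem theorem4p2 (R : rcfType) (d : nat) (E : rel 'I_d)
  (c : 'I_d -> 'I_d -> R)
  (hdag : acyclic E)
  (hedge : forall k i, E k i -> 0 < c i k)
  (hdiag : forall i, 0 < c i i)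
  (a : R) (ha : 1 < a)
  (O : {set 'I_d})
  (hO : forall l, l \in O -> Anc E l \subset O) :
  let A := standardise (pathmax E c) in
  (forall j, j \notin O ->
     (anc E j :&: ~: O = set0 <-> star_cond A a O j)) /\
  (forall j, j \notin O -> anc E j :&: ~: O != set0 ->
     forall i, i \notin O -> i != j ->
       sigma2 A (w_i_aj_aO a i j O) - sigma2 A (w_i_j_O i j O)
         <= (a ^+ 2 - 1) * sigma2 A (w_j_O j O)
       /\ (i \in anc E j ->
       sigma2 A (w_i_aj_aO a i j O) - sigma2 A (w_i_j_O i j O)
         < (a ^+ 2 - 1) * sigma2 A (w_j_O j O))) /\
  (forall j1 j2, j1 \notin O -> j2 \notin O -> j1 != j2 ->
     star_cond A a O j1 -> star_cond A a O j2 ->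
     j1 \notin anc E j2 /\ j2 \notin anc E j1).
Proof.
move=> A.
have h0 : forall l k, 0 <= A l k by move=> l k; apply: A0.
have h1 : forall l k, (0 < A l k) = connect E k l by move=> l k; apply: Apos.
have h2 : forall l k, l != k -> A l k < A k k by move=> l k; apply: Adom.
have HH := abs_main R d E A h0 h1 h2 O hO a ha.

exact HH.
Qed.
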